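(* Let $p$ be an odd prime. Then, modulo $p$, \[ (p-1)!!\equiv \operatorname{sf}(p-1)\equiv (-1)^{\frac{p-1}{2}}\, H(p-1) \pmod p. \]
   Context: For a natural number $n$, the double factorial $n!!$ is the product of the natural numbers less than or equal to $n$ that have the same parity as $n$. The superfactorial is $\operatorname{sf}(n)=\prod_{k=1}^{n} k!$. The hyperfactorial is $H(n)=\prod_{k=1}^{n} k^k$. *)

(* Defs.v *)
From mathcomp Require Import all_boot all_order all_algebra.
Set Implicit Arguments. Unset Strict Implicit. Unset Printing Implicit Defensive.

Fixpoint dfact (n : nat) : nat :=
  match n with
  | 0 => 1
  | 1 => 1
  | (m.+2) as k => k * dfact m
  end.

Definition superfact (n : nat) : nat := \prod_(1 <= k < n.+1) k`!.

Definition hyperfact (n : nat) : nat := \prod_(1 <= k < n.+1) k ^ k.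

(* Main.v *)
Require Import Defs.
From mathcomp Require Import all_boot all_order all_algebra all_field zify.
Import GRing.Theory Num.Theory.

Lemma sf_alt n : superfact n = \prod_(0 <= k < n) (k.+1) ^ (n - k).
Proof.
elim: n => [|n IH]; first by rewrite /superfact !big_geq.
rewrite /superfact big_nat_recr //= -/(superfact n) IH.
have -> : \prod_(0 <= k < n.+1) k.+1 ^ (n.+1 - k) = \prod_(0 <= k < n.+1) ((k.+1)^(n - k) * k.+1).
  by apply: eq_big_nat => i /andP[_ hi]; rewrite subSn // expnS mulnC.
rewrite big_split /= big_nat_recr //= subnn expn0 muln1.
by rewrite fact_prod big_add1 /=.
Qed.

Lemma hf_alt n : hyperfact n = \prod_(0 <= k < n) (k.+1) ^ (k.+1).
Proof. by rewrite /hyperfact big_add1. Qed.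

Lemma df_even a : dfact a.*2 = \prod_(0 <= k < a) (k.+1).*2.
Proof.
elim: a => [|a IH]; first by rewrite big_geq.
by rewrite doubleS /= -doubleS IH big_nat_recr //= mulnC.
Qed.

Lemma df_split a b : dfact (a + b).*2 = dfact a.*2 * \prod_(0 <= i < b) (a + i).+1.*2.
Proof.
elim: b => [|b IH]; first by rewrite big_geq // addn0 muln1.
rewrite addnS doubleS /= -doubleS IH big_nat_recr //=.
by rewrite mulnCA [_ * (_.+1.*2)]mulnC.
Qed.

Definition oddp b := \prod_(0 <= i < b) (i.*2).+1.

Lemma EO a : dfact a.*2 * oddp a = (a.*2)`! /\ dfact a.*2 * oddp a.+1 = (a.*2.+1)`!.
Proof.
elim: a => [|a [IH1 IH2]]; first by rewrite /oddp big_geq // big_nat1.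
have E1 : dfact (a.+1).*2 * oddp a.+1 = ((a.+1).*2)`!.
  by rewrite doubleS /= -doubleS -mulnA IH2 doubleS factS.
split=> //.
by rewrite /oddp big_nat_recr //= -/(oddp a.+1) mulnA E1 doubleS factS mulnC.
Qed.
Local Open Scope ring_scope.
Lemma pairing (R : comNzRingType) (m : nat) (G : nat -> R) :
  \prod_(0 <= k < m.*2) G k = \prod_(0 <= i < m) (G i * G ((m.*2).-1 - i)%N).
Proof.
elim: m G => [|m IH] G; first by rewrite !big_geq.
rewrite doubleS big_nat_recl // big_nat_recr //= (IH (fun k => G k.+1)).
rewrite [in RHS]big_nat_recl // subn0 /=.
rewrite -!mulrA; congr (_ * _); rewrite mulrC; congr (_ * _).
apply: eq_big_nat => i /andP[_ hi]; congr (_ * G _).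
lia.
Qed.

Lemma sign_double (R : comNzRingType) (n k : nat) : (-1 : R) ^+ (n + k.*2) = (-1) ^+ n.
Proof. by rewrite exprD -mul2n exprM expr2 mulrNN mulr1 expr1n mulr1. Qed.

Lemma sign_prod (R : comNzRingType) (a : nat) :
  \prod_(0 <= i < (a + a)%N) ((-1 : R) ^+ i.+1) = (-1) ^+ a.
Proof.
elim: a => [|a IH]; first by rewrite big_geq.
rewrite addnS addSn !big_nat_recr //= IH -mulrA -exprD.
have -> : ((a + a).+1 + (a + a).+2 = 1 + (a + a + 1).*2)%N by lia.
by rewrite sign_double [in RHS]exprSr expr1.
Qed.
Lemma transfer p (hp : prime p) (X Y : int) :
  (X%:~R : 'F_p) = Y%:~R -> (X = Y %[mod p%:Z])%Z.
Proof.
move=> h; apply/eqP; rewrite eqz_mod_dvd (dvdz_pcharf (pchar_Fp hp)).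
by rewrite rmorphB /= h subrr.
Qed.

Lemma Fneg p (hp : prime p) (i j : nat) : (i + j)%N = p -> (i%:R : 'F_p) = - j%:R.
Proof. by move=> h; apply/eqP; rewrite -addr_eq0 -natrD h pchar_Fp_0. Qed.

Lemma Ferm p (hp : prime p) (x : 'F_p) : x ^+ p = x.
Proof. by rewrite -{2}(expf_card x) card_Fp. Qed.


Lemma sfF p (hp : prime p) m (hpm : p = (m.*2).+1) :
  ((superfact m.*2)%:R : 'F_p) = \prod_(0 <= i < m) ((-1) ^+ i.+1 * (i.+1)%:R).
Proof.
rewrite sf_alt natr_prod pairing; apply: eq_big_nat => i /andP[_ hi].
rewrite !natrX.
have -> : (m.*2 - (m.*2.-1 - i) = i.+1)%N by lia.
have -> : ((m.*2.-1 - i).+1 = m.*2 - i)%N by lia.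
rewrite (@Fneg p hp (m.*2 - i)%N i.+1); last by lia.
rewrite [in LHS]exprNn mulrCA -exprD.
have -> : (m.*2 - i + i.+1 = p)%N by lia.
by rewrite Ferm.
Qed.

Lemma hfF p (hp : prime p) m (hpm : p = (m.*2).+1) :
  ((hyperfact m.*2)%:R : 'F_p) = \prod_(0 <= i < m) ((-1) ^+ i * (i.+1)%:R).
Proof.
rewrite hf_alt natr_prod pairing; apply: eq_big_nat => i /andP[_ hi].
rewrite !natrX.
have -> : ((m.*2.-1 - i).+1 = m.*2 - i)%N by lia.
rewrite (@Fneg p hp (m.*2 - i)%N i.+1); last by lia.
rewrite [in LHS]exprNn mulrCA -exprD.
have -> : (i.+1 + (m.*2 - i) = p)%N by lia.
have -> : (m.*2 - i = i + (m - i).*2)%N by lia.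
by rewrite sign_double Ferm.
Qed.

Lemma sf_hf p (hp : prime p) m (hpm : p = (m.*2).+1) :
  ((superfact m.*2)%:R : 'F_p) = (-1) ^+ m * (hyperfact m.*2)%:R.
Proof.
rewrite sfF // hfF //.
rewrite (eq_big_nat _ _ (F2 := fun i => (-1) * ((-1) ^+ i * (i.+1)%:R : 'F_p))); last first.
  by move=> i _; rewrite exprS mulrA.
by rewrite big_split /= prodr_const_nat subn0.
Qed.

Lemma dfF p (hp : prime p) a b (hb : b = a \/ b = a.+1) (hpm : p = ((a + b).*2).+1) :
  ((dfact (a + b).*2)%:R : 'F_p) = (-1) ^+ b * ((a + b)`!)%:R.
Proof.
rewrite df_split natrM natr_prod.
rewrite (eq_big_nat _ _ (F2 := fun i => (-1) * (((b - i.+1).*2).+1%:R : 'F_p))); last first.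
  move=> i /andP[_ hi]; rewrite mulN1r; apply: (@Fneg p hp); lia.
rewrite big_split /= prodr_const_nat subn0.
have -> : \prod_(0 <= i < b) (((b - i.+1).*2).+1%:R : 'F_p) = (oddp b)%:R.
  rewrite /oddp natr_prod (big_nat_rev _ _ 0 b); apply: eq_big_nat => i /andP[_ hi].
  by rewrite add0n; have -> : (b - (b - i.+1).+1 = i)%N by lia.
rewrite mulrCA -natrM.
have [E1 E2] := EO a.
by case: hb => ->; rewrite ?E1 ?E2 // ?addnS addnn.
Qed.

Lemma sign_prod2 (R : comNzRingType) a b (hb : b = a \/ b = a.+1) :
  \prod_(0 <= i < (a + b)%N) ((-1 : R) ^+ i.+1) = (-1) ^+ b.
Proof.
case: hb => ->; first exact: sign_prod.
rewrite addnS big_nat_recr //= sign_prod -exprD.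
have -> : (a + (a + a).+1 = a.+1 + a.*2)%N by lia.
by rewrite sign_double.
Qed.

Lemma dfsfF p (hp : prime p) m (hpm : p = (m.*2).+1) :
  ((dfact m.*2)%:R : 'F_p) = (superfact m.*2)%:R.
Proof.
have hm : m = (m./2 + (odd m + m./2))%N by rewrite addnCA addnn odd_double_half.
have hb : (odd m + m./2 = m./2)%N \/ (odd m + m./2 = (m./2).+1)%N by case: (odd m); [right|left].
rewrite sfF // big_split /= hm sign_prod2 // dfF // -?hm //.
by rewrite fact_prod big_add1 natr_prod.
Qed.

Theorem theorem2 (p : nat) (hp : prime p) (hodd : odd p) :
  ((dfact p.-1)%:Z = (superfact p.-1)%:Z %[mod p%:Z])%Z /\
  ((superfact p.-1)%:Z = (-1) ^+ (p.-1)./2 * (hyperfact p.-1)%:Z %[mod p%:Z])%Z.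
Proof.
have hpm : p = (p./2).*2.+1 by rewrite -[LHS]odd_double_half hodd.
have hp1 : p.-1 = (p./2).*2 by rewrite [in LHS]hpm.
rewrite hp1 doubleK; split.
  apply: (@transfer p hp (Posz (dfact (p./2).*2)) (Posz (superfact (p./2).*2))).
  by rewrite -!pmulrn; apply: dfsfF.
apply: (@transfer p hp (Posz (superfact (p./2).*2)) ((-1) ^+ p./2 * Posz (hyperfact (p./2).*2))).
rewrite rmorphM rmorphXn /= rmorphN1 -!pmulrn.
exact: sf_hf.
Qed.
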